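(* Let $A$ be a real square matrix such that $A^n>0$ (all entries strictly positive) for some $n>0$. Let $\lambda$ be its Perron–Frobenius eigenvalue, and let $r>0$ satisfy $\lambda>r>|\mu|$ for every eigenvalue $\mu\neq\lambda$ of $A$. Let $v\in NonN(A)$ with $v\notin\ker(A-\lambda I)$. Then there exist $C>0$ and $N$ such that for every $n>N$ and every vector $w$ with $A^n w=v$ we have $\|w\|_1>C/r^n$.
   Context: For a square matrix $A$ acting on $\mathbb{F}^d$ ($\mathbb{F}=\mathbb{R}$ or $\mathbb{C}$), the non-nilpotent subspace $NonN(A)$ is the direct sum of the generalized eigenspaces of $A$ belonging to nonzero eigenvalues (equivalently, the eventual range $\bigcap_{n} A^n(\mathbb{F}^d)$). The Perron–Frobenius eigenvalue of a matrix with $A^n>0$ for some $n$ is its simple, real, positive eigenvalue of largest modulus. *)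

(* Defs.v *)
From HB Require Import structures.
From mathcomp Require Import all_boot all_order all_algebra.
From mathcomp Require Import reals.
From mathcomp Require Import complex.
Set Implicit Arguments. Unset Strict Implicit. Unset Printing Implicit Defensive.
Import Order.TTheory GRing.Theory Num.Theory.
Local Open Scope ring_scope.
Local Open Scope complex_scope.

Section Defs.
Variable R : realType.

Definition cplx_mx (d : nat) (A : 'M[R]_d) : 'M[R[i]]_d :=
  map_mx (fun x : R => x%:C) A.

Definition ceigenvalue (d : nat) (A : 'M[R]_d) (mu : R[i]) : bool :=
  eigenvalue (cplx_mx A) mu.

Definition pos_mx (d : nat) (B : 'M[R]_d) : Prop := forall i j, 0 < B i j.

Definition PF_eigenvalue (d : nat) (A : 'M[R]_d) (lam : R) : Prop :=
  [/\ 0 < lam,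
      eigenvalue A lam,
      mup lam (char_poly A) = 1%N
    & forall mu : R[i], ceigenvalue A mu -> `|mu| <= lam%:C].

Definition NonN (d : nat) (A : 'M[R]_d) (v : 'cV[R]_d) : Prop :=
  forall n : nat, exists u : 'cV[R]_d, A ^+ n *m u = v.

Definition norm1 (d : nat) (w : 'cV[R]_d) : R := \sum_i `|w i 0|.
End Defs.

(* Main.v *)
Require Import Defs.
From HB Require Import structures.
From mathcomp Require Import all_boot all_order all_algebra.
From mathcomp Require Import reals.
From mathcomp Require Import complex.
From mathcomp Require Import ring lra.
Import Order.TTheory GRing.Theory Num.Theory.
Local Open Scope ring_scope.
Local Open Scope complex_scope.

Lemma normC_real (R : realType) (x : R) : `|x%:C| = `|x|%:C.
Proof. by rewrite normc_def /= expr0n /= addr0 sqrtr_sqr. Qed.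


Lemma factor (R : realType) (d : nat) (A : 'M[R]_d.+1) (lam : R)
  (hPF : PF_eigenvalue A lam) : exists s : {poly R}, [/\ s \is monic, ~~ root s lam, ~~ root s 0 &
   exists k, char_poly A = s * (('X - 0%:P) ^+ k * ('X - lam%:P))].
Proof.
case: hPF => lam0 _ hmup _.
have pn0 : char_poly A != 0 by rewrite monic_neq0 // char_poly_monic.
have [m [q hq Ep]] := multiplicity_XsubC (char_poly A) lam.
rewrite pn0 /= in hq.
have m1 : m = 1%N.
  by move: hmup; rewrite Ep mupMr // mup_XsubCX eqxx.
subst m; rewrite expr1 in Ep.
have qn0 : q != 0 by apply: contraNneq hq => ->; rewrite root0.
have [k [s hs Eq]] := multiplicity_XsubC q 0.
rewrite qn0 /= in hs.
exists s; split.
- have := char_poly_monic A; rewrite Ep Eq -mulrA monicMr //.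
  by rewrite monicMl ?monicXsubC // monic_exp // monicXsubC.
- by apply: contra hq; rewrite Eq rootM => ->.
- by [].
- by exists k; rewrite Ep Eq mulrA.
Qed.


Lemma core (F : numFieldType) d (B : 'M[F]_d.+1) (l : seq F) (r : F) :
  0 < r -> (forall mu, mu \in l -> `|mu| < r) ->
  forall X : 'M[F]_d.+1,
  horner_mx B (\prod_(mu <- l) ('X - mu%:P)) *m X = 0 ->
  exists K, 0 <= K /\ forall n i j, `|(B ^+ n *m X) i j| <= K * r ^+ n.
Proof.
move=> r0; elim: l => [|mu l IH] hl X.
  rewrite big_nil rmorph1 mul1mx => ->.
  by exists 0; split=> // n i j; rewrite mulmx0 mxE normr0 mul0r.
rewrite big_cons rmorphM /= => hX.
have hl' : forall m, m \in l -> `|m| < r.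
  by move=> m hm; apply: hl; rewrite inE hm orbT.
have hmu : `|mu| < r by apply: hl; rewrite inE eqxx.
have hX' : horner_mx B (\prod_(j <- l) ('X - j%:P)) *m ((B - mu%:M) *m X) = 0.
  move: hX; rewrite (comm_horner_mx2 B ('X - mu%:P)) -mulmxA.
  by rewrite rmorphB /= horner_mx_X horner_mx_C.
have [K [K0 HK]] := IH hl' _ hX'.
set e := r - `|mu|.
have e0 : 0 < e by rewrite subr_gt0.
set S := \sum_i \sum_j `|X i j|.
have S0 : 0 <= S by apply: sumr_ge0 => i _; apply: sumr_ge0 => j _.
exists (S + K / e); split.
  by apply: addr_ge0 => //; apply: divr_ge0 => //; apply: ltW.
elim=> [|n IHn] i j.
  rewrite expr0 mulr1 mul1mx.
  apply: ler_wpDr; first by apply: divr_ge0 => //; apply: ltW.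
  rewrite /S (bigD1 i) //= (bigD1 j) //= -addrA ler_wpDr //.
  apply: addr_ge0; first by apply: sumr_ge0.
  by apply: sumr_ge0 => k _; apply: sumr_ge0.
have -> : B ^+ n.+1 *m X = mu *: (B ^+ n *m X) + B ^+ n *m ((B - mu%:M) *m X).
  rewrite mulmxBl mulmxBr mul_scalar_mx -scalemxAr addrC subrK.
  by rewrite exprSr mulmxA.
rewrite [Z in `|Z|](_ : _ = mu * (B ^+ n *m X) i j + (B ^+ n *m ((B - mu%:M) *m X)) i j);
  last by rewrite !mxE.
apply: (le_trans (ler_normD _ _)).
rewrite normrM.
apply: (le_trans (lerD (ler_wpM2l (normr_ge0 mu) (IHn i j)) (HK n i j))).
rewrite -subr_ge0.
have -> : (S + K / e) * r ^+ n.+1 - (`|mu| * ((S + K / e) * r ^+ n) + K * r ^+ n)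
   = e * S * r ^+ n.
  have hm : `|mu| = r - e by rewrite /e opprB addrC subrK.
  rewrite hm exprS; field; exact: lt0r_neq0.
by apply: mulr_ge0; [apply: mulr_ge0; [apply: ltW|] | apply: exprn_ge0; apply: ltW].
Qed.

Lemma mainS (R : realType) (d : nat) (A : 'M[R]_d.+1)
  (lam : R) (hPF : PF_eigenvalue A lam)
  (r : R) (hr0 : 0 < r)
  (hr : forall mu : R[i], ceigenvalue A mu -> mu != lam%:C -> `|mu| < r%:C)
  (v : 'cV[R]_d.+1) (hv : NonN A v) (hvker : (A - lam%:M) *m v != 0) :
  exists C : R, 0 < C /\ exists N : nat, forall n : nat, (N < n)%N ->
    forall w : 'cV[R]_d.+1, A ^+ n *m w = v -> C / r ^+ n < norm1 w.
Proof.
have [s [smon slam s0 [k Ep]]] := @factor R d A lam hPF.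
set g := ('X - 0%:P) ^+ k * ('X - lam%:P) in Ep.
have cop : coprimep s g.
  rewrite coprimepMr coprimep_XsubC slam andbT.
  by apply: coprimep_expr; rewrite coprimep_XsubC.
have [[u1 u2] /= Hu] := Bezout_eq1_coprimepP _ _ cop.
set Q := horner_mx A (u2 * g * ('X - lam%:P)).
have hsQ : horner_mx A s *m Q = 0.
  rewrite /Q mulmxE -rmorphM /=.
  have -> : s * (u2 * g * ('X - lam%:P)) = u2 * char_poly A * ('X - lam%:P).
    by rewrite Ep; ring.
  by rewrite !rmorphM /= Cayley_Hamilton mulr0 mul0r.
have [v0 Ev0] := hv k.
set y := (A - lam%:M) *m v.
have hXl : horner_mx A ('X - lam%:P) = A - lam%:M.
  by rewrite rmorphB /= horner_mx_X horner_mx_C.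
have Qv : Q *m v = y.
  have hsy : horner_mx A s *m y = 0.
    have hXk : horner_mx A ('X ^+ k) = A ^+ k.
      by rewrite rmorphXn /= horner_mx_X.
    rewrite /y -Ev0 -hXl -hXk !mulmxA !mulmxE -!rmorphM /=.
    have -> : s * ('X - lam%:P) * 'X ^+ k = char_poly A.
      by rewrite Ep /g subr0; ring.
    by rewrite Cayley_Hamilton mul0mx.
  have -> : y = horner_mx A (u1 * s + u2 * g) *m y by rewrite Hu rmorph1 mul1mx.
  rewrite rmorphD /= mulmxDl rmorphM /= -mulmxA hsy mulmx0 add0r.
  by rewrite /Q rmorphM /= -mulmxE -mulmxA hXl.
pose f := real_complex R.
have Es : map_poly f s = \prod_(z <- sval (closed_field_poly_normal (map_poly f s))) ('X - z%:P).
  case: closed_field_poly_normal => rs /= Ers.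
  by rewrite {1}Ers lead_coef_map /= (monicP smon) rmorph1 scale1r.
move: Es; set rs := sval _ => Es.
have hroots : forall mu, mu \in rs -> `|mu| < r%:C.
  move=> mu hmu; apply: hr.
    rewrite /ceigenvalue eigenvalue_root_char.
    change (cplx_mx A) with (map_mx f A).
    by rewrite -map_char_poly Ep rmorphM rootM /= Es root_prod_XsubC hmu.
  apply: contraNneq slam => Emu.
  rewrite -(fmorph_root f) Es root_prod_XsubC; move: hmu; rewrite Emu; exact.
have hQc : horner_mx (map_mx f A) (\prod_(z <- rs) ('X - z%:P)) *m map_mx f Q = 0.
  by rewrite -Es -map_horner_mx -map_mxM hsQ map_mx0.
have rc0 : 0 < r%:C by rewrite ltcR.
have [K [K0 HK]] := @core _ _ _ _ _ rc0 hroots _ hQc.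
have EK : K = (complex.Re K)%:C by rewrite RRe_real // ger0_real.
have HB : forall n i j, `|(A ^+ n *m Q) i j| <= complex.Re K * r ^+ n.
  move=> n i j; move: (HK n i j).
  by rewrite -rmorphXn -map_mxM mxE normC_real EK -rmorphXn -rmorphM lecR.
set kk := complex.Re K in HB.
have kk0 : 0 <= kk by rewrite -ler0c -EK.
set Y := \sum_i `|y i 0|.
have Y0 : 0 < Y.
  rewrite lt_def sumr_ge0 ?andbT; last by move=> i _; exact: normr_ge0.
  apply: contra hvker => /eqP /psumr_eq0P HY.
  apply/eqP/matrixP => i j; rewrite (ord1 j).
  change (y i 0 = (0 : 'cV[R]_d.+1) i 0); rewrite [RHS]mxE.
  by apply/eqP; rewrite -normr_eq0; apply/eqP; apply: HY.
set L := (d.+1)%:R * kk + 1.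
have L0 : 0 < L by rewrite /L ltr_wpDl // mulr_ge0.
exists (Y / (2 * L)); split; first by rewrite divr_gt0 // mulr_gt0.
exists 0%N => n _ w Ew.
have hXn : horner_mx A ('X ^+ n) = A ^+ n by rewrite rmorphXn /= horner_mx_X.
have hy : (A ^+ n *m Q) *m w = y.
  rewrite -hXn mulmxE (comm_horner_mx2 A ('X ^+ n)) -mulmxE -mulmxA hXn Ew.
  exact: Qv.
have hyi : forall i, `|y i 0| <= kk * r ^+ n * norm1 w.
  move=> i; rewrite -hy mxE /norm1 mulr_sumr.
  apply: (le_trans (ler_norm_sum _ _ _)); apply: ler_sum => j _.
  rewrite normrM; apply: ler_wpM2r; first exact: normr_ge0.
  exact: HB.
have hY : Y <= L * r ^+ n * norm1 w.
  apply: (le_trans (ler_sum _ (fun i _ => hyi i))).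
  rewrite sumr_const card_ord /L -mulr_natl.
  have n0 : 0 <= r ^+ n * norm1 w.
    apply: mulr_ge0; first by rewrite exprn_ge0 // ltW.
    by apply: sumr_ge0 => j _; exact: normr_ge0.
  nra.
have rn0 : 0 < r ^+ n by rewrite exprn_gt0.
rewrite ltr_pdivrMr // ltr_pdivrMr ?mulr_gt0 //.
have -> : norm1 w * r ^+ n * (2 * L) = 2 * (L * r ^+ n * norm1 w) by ring.
lra.
Qed.

Theorem fact2p1 (R : realType) (d : nat) (A : 'M[R]_d)
  (hprim : exists n : nat, (0 < n)%N /\ pos_mx (A ^+ n))
  (lam : R) (hPF : PF_eigenvalue A lam)
  (r : R) (hr0 : 0 < r) (hlr : r < lam)
  (hr : forall mu : R[i], ceigenvalue A mu -> mu != lam%:C -> `|mu| < r%:C)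
  (v : 'cV[R]_d) (hv : NonN A v) (hvker : (A - lam%:M) *m v != 0) :
  exists C : R, 0 < C /\ exists N : nat, forall n : nat, (N < n)%N ->
    forall w : 'cV[R]_d, A ^+ n *m w = v -> C / r ^+ n < norm1 w.
Proof.
destruct d as [|d].
  by move: hvker; rewrite (flatmx0 v) mulmx0 eqxx.
exact: (@mainS R d A lam hPF r hr0 hr v hv hvker).
Qed.
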